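(* Let $n_1,\dots,n_l\ge2$ be integers, and suppose there are integers $1\le j\le k\le l-1$ such that $n_j\ge3$ and $u_j+u_{j+1}+v_j+v_{j+1}\le q$. Let $(n_1',\dots,n_l')$ be obtained from $(n_1,\dots,n_l)$ by replacing $n_k$ by $n_k+1$, and let $q',u_i',v_i'$ be the corresponding quantities for $(n_1',\dots,n_l')$. Then $u_j'+u_{j+1}'+v_j'+v_{j+1}'\le q'$.
   Context: For integers $m_1,\dots,m_r\ge2$, $|[m_1,\dots,m_r]|$ is the absolute value of the determinant of the tridiagonal $r\times r$ matrix with diagonal entries $-m_1,\dots,-m_r$ and $1$'s directly above and below the diagonal (empty bracket $=1$). For $(n_1,\dots,n_l)$: $q=|[n_1,\dots,n_l]|$; $u_0=0$, $u_1=1$, $u_s=|[n_1,\dots,n_{s-1}]|$ for $2\le s\le l+1$; $v_s=|[n_{s+1},\dots,n_l]|$ for $0\le s\le l-1$, $v_l=1$, $v_{l+1}=0$. *)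

(* Defs.v *)
From HB Require Import structures.
From mathcomp Require Import all_boot all_order all_algebra.
Set Implicit Arguments. Unset Strict Implicit. Unset Printing Implicit Defensive.
Import Order.TTheory GRing.Theory Num.Theory.

(* Sequences are 0-indexed: the paper's n_i is [nth 0 ns i.-1]. *)

Definition tridiag (s : seq nat) : 'M[int]_(size s) :=
  \matrix_(i < size s, j < size s)
    (if i == j then - ((nth 0%N s i)%:Z)
     else if (i.+1 == j :> nat) || (j.+1 == i :> nat) then 1 else 0)%R.

(* |[m_1,...,m_r]| ; the empty bracket is the 0x0 determinant = 1 *)
Definition bracket (s : seq nat) : nat := absz (\det (tridiag s))%R.

Definition qq (ns : seq nat) : nat := bracket ns.

(* u_0 = 0, u_1 = 1, u_s = |[n_1,...,n_{s-1}]| for 2 <= s <= l+1 *)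
Definition uu (ns : seq nat) (s : nat) : nat :=
  match s with
  | 0 => 0
  | 1 => 1
  | _ => bracket (take s.-1 ns)
  end.

(* v_s = |[n_{s+1},...,n_l]| for 0 <= s <= l-1, v_l = 1, v_{l+1} = 0 *)
Definition vv (ns : seq nat) (s : nat) : nat :=
  if s < size ns then bracket (drop s ns)
  else if s == size ns then 1 else 0.

(* Main.v *)
Require Import Defs.
From HB Require Import structures.
From mathcomp Require Import all_boot all_order all_algebra.
From mathcomp Require Import ring lra zify.
Import Order.TTheory GRing.Theory Num.Theory.
Open Scope ring_scope.
Lemma c1 (m : nat) (t : seq nat) : row' 0 (col' 0 (tridiag (m::t))) = tridiag t.
Proof.
apply/matrixP => i j; rewrite !mxE /= (inj_eq (@lift_inj _ _)) /bump !add1n.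
by [].
Qed.
Lemma c2 (m m' : nat) (t : seq nat) :
  \det (row' 0 (col' 1 (tridiag (m::m'::t)))) = \det (tridiag t).
Proof.
rewrite (expand_det_col _ ord0) big_ord_recl big1.
  rewrite addr0 !mxE /= mul1r /cofactor expr0 mul1r; congr (\det _).
  apply/matrixP => i j; rewrite !mxE /= /bump /=.
  by rewrite -val_eqE /= /bump /= !add1n !eqSS.
move=> i _; rewrite !mxE /= /bump /=.
by rewrite mul0r.
Qed.
Lemma c3 (m : nat) (t : seq nat) :
  \det (tridiag (m::t)) = - (m%:Z) * \det (tridiag t) -
     (if t is _ :: t' then \det (tridiag t') else 0).
Proof.
rewrite (expand_det_row _ ord0) big_ord_recl.
rewrite /cofactor expr0 mul1r c1 {1}/tridiag mxE /=.
case: t => [|m' t'].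
  by rewrite big_ord0 addr0 ?subr0.
rewrite (big_ord_recl (size t')) big1.
  rewrite addr0 {1}/tridiag mxE /= mul1r.
  have -> : lift ord0 (@ord0 (size t')) = 1 :> 'I_(size t').+2 by apply/val_inj.
  by rewrite c2 expr1 mulN1r.
move=> i _; rewrite {1}/tridiag mxE /= /bump /=.
by rewrite mul0r.
Qed.
Fixpoint F (s : seq nat) : int :=
  match s with
  | [::] => 1
  | m :: t => m%:Z * F t - (if t is _ :: t' then F t' else 0)
  end.
Definition Fb (s : seq nat) : int := if s is _ :: t then F t else 0.
Lemma FE m t : F (m :: t) = m%:Z * F t - Fb t.
Proof. by []. Qed.
Arguments F : simpl never.
Lemma detF s : \det (tridiag s) = (-1) ^+ size s * F s.
Proof.
have H : forall n s, (size s <= n)%N -> \det (tridiag s) = (-1) ^+ size s * F s.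
  elim=> [|n IH] [|m t] //. all: try by move=> _; rewrite det_mx00 expr0 mul1r.
  move=> Hs; rewrite c3 (IH t) // FE; case: t Hs => [|m' t'] Hs.
    by rewrite /= expr0 expr1; ring.
  rewrite (IH t'); last by move: Hs => /=; lia.
  rewrite /Fb /= !exprS; ring.
by apply: (H (size s)).
Qed.
Lemma bracketF s : bracket s = `|F s|%N.
Proof. by rewrite /bracket detF abszMsign. Qed.
Lemma FbE m t : Fb (m :: t) = F t.
Proof. by []. Qed.
Arguments Fb : simpl never.
Lemma F0 : F [::] = 1. Proof. by []. Qed.
Lemma Fb0 : Fb [::] = 0. Proof. by []. Qed.
Lemma Fpos s : all (fun m => 2 <= m)%N s -> 0 <= Fb s /\ Fb s + 1 <= F s.
Proof.
elim: s => [|m t IH] /=; first by [].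
move=> /andP [hm /IH [h1 h2]]; rewrite FE FbE; split; first lia.
have : (2 <= m%:Z) by rewrite lez_nat.
nia.
Qed.
Lemma Flin A z B :
  F (A ++ z.+1 :: B) = F (A ++ z :: B) + F A * F B /\
  Fb (A ++ z.+1 :: B) = Fb (A ++ z :: B) + Fb A * F B.
Proof.
elim: A => [|w T [IH1 IH2]] /=.
  rewrite !FE /= -addn1 PoszD; split; ring.
rewrite !FE !FbE IH1 IH2; split; ring.
Qed.
Lemma Fsplit P x Q :
  F (P ++ x :: Q) = F (rcons P x) * F Q - F P * Fb Q /\
  Fb (P ++ x :: Q) = Fb (rcons P x) * F Q - Fb P * Fb Q.
Proof.
elim: P => [|w T [IH1 IH2]] /=.
  rewrite !FE /= ; split; ring.
rewrite !FE !FbE IH1 IH2; split; ring.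
Qed.
Lemma Fmono P x : (3 <= x)%N -> all (fun m => 2 <= m)%N P ->
  F P + 2 <= F (rcons P x).
Proof.
move=> hx.
suff: all (fun m => 2 <= m)%N P ->
  2 <= F (rcons P x) - F P /\ Fb (rcons P x) - Fb P + 1 <= F (rcons P x) - F P by
  move=> h /h [h1 _]; lia.
elim: P => [|w T IH] /=.
  rewrite !FE !FbE F0 Fb0; have : (3 <= x%:Z) by rewrite lez_nat.
  lia.
move=> /andP [hw /IH [h1 h2]]; rewrite !FE !FbE.
have : (2 <= w%:Z) by rewrite lez_nat.
split; nia.
Qed.
Lemma quant (P : seq nat) (x : nat) (R : seq nat) : R != [::] ->
  let L := P ++ x :: R in
  uu L (size P).+1 = `|F P|%N /\ uu L (size P).+2 = `|F (rcons P x)|%N /\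
  vv L (size P).+1 = `|F R|%N /\ vv L (size P).+2 = `|Fb R|%N /\
  qq L = `|F L|%N.
Proof.
case: R => [|y S] // _ L; subst L.
split.
  case: P => [|w T] //.
  by rewrite /uu /= bracketF take_size_cat.
split.
  by rewrite /uu /= bracketF -cats1 take_cat ltnNge leqnSn /= subSnn.
rewrite /vv size_cat /= !FbE.
split.
  rewrite ifT; last by lia.
  by rewrite bracketF -cat_rcons drop_size_cat ?size_rcons.
split.
  case: S => [|z S].
    by rewrite addn2 ltnn eqxx.
  rewrite ifT; last by rewrite /=; lia.
  by rewrite bracketF -cat_rcons -cat_rcons drop_size_cat ?size_rcons.
by rewrite /qq bracketF.
Qed.
Lemma set_nth_cat (P s : seq nat) i v :
  set_nth 0%N (P ++ s) (size P + i) v = P ++ set_nth 0%N s i v.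
Proof. by elim: P => //= a P ->. Qed.
Notation A2 := (fun m => 2 <= m)%N.
Lemma core1 (P : seq nat) (x : nat) (R : seq nat) : R != [::] -> all A2 (P ++ x :: R) ->
  let L := P ++ x :: R in let L' := P ++ x.+1 :: R in
  (uu L (size P).+1 + uu L (size P).+2 + vv L (size P).+1 + vv L (size P).+2 <= qq L)%N ->
  (uu L' (size P).+1 + uu L' (size P).+2 + vv L' (size P).+1 + vv L' (size P).+2 <= qq L')%N.
Proof.
move=> hR hall L L'.
have [h1 [h2 [h3 [h4 h5]]]] := quant P x R hR.
have [h1' [h2' [h3' [h4' h5']]]] := quant P x.+1 R hR.
rewrite /L' h1' h2' h3' h4' h5' /L h1 h2 h3 h4 h5.
have [q0 q1] := Fpos _ hall.
move: hall; rewrite all_cat /= => /and3P [aP ax aR].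
have [pP1 pP2] := Fpos _ aP.
have [pR1 pR2] := Fpos _ aR.
have aPx : all A2 (rcons P x) by rewrite all_rcons ax aP.
have [pPx1 pPx2] := Fpos _ aPx.
have aPx' : all A2 (rcons P x.+1) by rewrite all_rcons aP andbT; apply: leqW.
have [pPx1' pPx2'] := Fpos _ aPx'.
have aL' : all A2 (P ++ x.+1 :: R) by rewrite all_cat /= aP aR andbT; apply: leqW.
have [q02 q2] := Fpos _ aL'.
have [e1 _] := Flin P x [::].
rewrite !cats1 F0 mulr1 in e1.
have [s1 _] := Fsplit P x R.
have [s2 _] := Fsplit P x.+1 R.
rewrite -!lez_nat !PoszD !gez0_abs; try lia.
rewrite s1 s2 e1; nia.
all: by [have := q2; have := q02; lia | have := q1; have := q0; lia | have := pPx2; have := pPx1; lia | have := pPx2'; have := pPx1'; lia].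
Qed.

Lemma core2 (P : seq nat) (x : nat) (A : seq nat) (z : nat) (B : seq nat) :
  (3 <= x)%N -> all A2 (P ++ x :: (A ++ z :: B)) ->
  let L := P ++ x :: (A ++ z :: B) in let L' := P ++ x :: (A ++ z.+1 :: B) in
  (uu L (size P).+1 + uu L (size P).+2 + vv L (size P).+1 + vv L (size P).+2 <= qq L)%N ->
  (uu L' (size P).+1 + uu L' (size P).+2 + vv L' (size P).+1 + vv L' (size P).+2 <= qq L')%N.
Proof.
move=> hx hall L L'.
have hR : A ++ z :: B != [::] by rewrite -size_eq0 size_cat /= addnS.
have hR' : A ++ z.+1 :: B != [::] by rewrite -size_eq0 size_cat /= addnS.
have [h1 [h2 [h3 [h4 h5]]]] := quant P x _ hR.
have [h1' [h2' [h3' [h4' h5']]]] := quant P x _ hR'.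
rewrite /L' h1' h2' h3' h4' h5' /L h1 h2 h3 h4 h5.
have [q0 q1] := Fpos _ hall.
move: hall; rewrite all_cat /= => /and3P [aP ax aR].
have aR' : all A2 (A ++ z.+1 :: B).
  move: aR; rewrite !all_cat /= => /and3P [-> hz ->]; rewrite andbT; exact: leqW.
move: (aR); rewrite all_cat /= => /and3P [aA _ aB].
have [pP1 pP2] := Fpos _ aP.
have [pR1 pR2] := Fpos _ aR.
have [pR1' pR2'] := Fpos _ aR'.
have [pA1 pA2] := Fpos _ aA.
have [pB1 pB2] := Fpos _ aB.
have aPx : all A2 (rcons P x) by rewrite all_rcons ax aP.
have [pPx1 pPx2] := Fpos _ aPx.
have aL' : all A2 (P ++ x :: (A ++ z.+1 :: B)) by rewrite all_cat /= aP ax aR'.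
have [q02 q2] := Fpos _ aL'.
have mo := Fmono P x hx aP.
have [e1 e2] := Flin A z B.
have [s1 _] := Fsplit P x (A ++ z :: B).
have [s2 _] := Fsplit P x (A ++ z.+1 :: B).
rewrite -!lez_nat !PoszD !gez0_abs; try lia.
rewrite s1 s2 e1 e2.
have hY : 0 <= Fb A * F B by nia.
have hXY : Fb A * F B <= F A * F B by nia.
have hm : (1 + F P) * (Fb A * F B) <= (F (rcons P x) - 1) * (F A * F B) by nia.
move: hY hXY hm.
move: (Fb A * F B) (F A * F B) => Y X.
nia.
Qed.
Lemma nth_cat' (P s : seq nat) n : nth 0%N (P ++ s) (size P + n) = nth 0%N s n.
Proof. by elim: P. Qed.
Close Scope ring_scope.

Theorem lemma4p5 (ns : seq nat) (j k : nat) :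
  all (fun m => 2 <= m) ns ->
  1 <= j -> j <= k -> k <= (size ns).-1 ->
  3 <= nth 0 ns j.-1 ->
  uu ns j + uu ns j.+1 + vv ns j + vv ns j.+1 <= qq ns ->
  let ns' := set_nth 0 ns k.-1 (nth 0 ns k.-1).+1 in
  uu ns' j + uu ns' j.+1 + vv ns' j + vv ns' j.+1 <= qq ns'.
Proof.
move=> hall hj hjk hk hx H; cbv zeta.
case: j hj hjk hx H => [|j] // _ hjk hx H.
case: k hjk hk => [|k] // hjk hk.
rewrite -subn1 in hk; rewrite /= in hx *.
have hjs : j.+1 < size ns by lia.
have [P [x [R [Hd [hsP hR]]]]] : exists P x R, ns = P ++ x :: R /\ size P = j /\ R != [::].
  exists (take j ns), (nth 0 ns j), (drop j.+1 ns).
  rewrite -drop_nth ?cat_take_drop ?size_take; last by [exact: hjs | exact: ltnW hjs].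
  rewrite ifT; last by [exact: hjs | exact: ltnW hjs].
  split=> //; split=> //.
  by rewrite -size_eq0 size_drop subn_eq0 -ltnNge.
subst ns j.
move: hx; rewrite -[size P]addn0 nth_cat' addn0 /= => hx.
case: (ltngtP k (size P)) => hkP.
- lia.
- have [A [z [B [ER hsA]]]] : exists A z B, R = A ++ z :: B /\ size A = k - (size P).+1.
    exists (take (k - (size P).+1) R), (nth 0 R (k - (size P).+1)),
      (drop (k - (size P).+1).+1 R).
    rewrite -drop_nth ?cat_take_drop ?size_take //; last first.
      move: hk; rewrite size_cat /=; lia.
    rewrite ifT //; move: hk; rewrite size_cat /=; lia.
  subst R.
  have -> : k = size P + (size A + 0).+1 by lia.
  rewrite nth_cat' /= nth_cat' /= set_nth_cat /= set_nth_cat /=.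
  exact: (core2 P x A z B hx hall H).
- rewrite hkP -[size P]addn0 nth_cat' set_nth_cat addn0 /=.
  exact: (core1 P x R hR hall H).
Qed.
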